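(* Let $\mathcal{X},\mathcal{Y}\in\mathbb{R}^{d\times n}$, let $\mathcal{Y}^{T}\mathcal{X}=U\Sigma V^{T}$ be a singular value decomposition (with $U,V\in\mathbb{R}^{n\times n}$ orthogonal and $\Sigma$ diagonal with nonnegative entries), and set $Q^\ast=UV^{T}$ and $\mathcal{Y}_h=\mathcal{Y}Q^\ast$. Let $\mathcal{P}_n$ be the set of $n\times n$ permutation matrices. Then: (i) $Q^\ast$ minimizes $\|\mathcal{X}-\mathcal{Y}Q\|_F$ over all orthogonal $n\times n$ matrices $Q$, and hence $\|\mathcal{X}-\mathcal{Y}_h\|_F\le \min_{T\in\mathcal{P}_n}\|\mathcal{X}-\mathcal{Y}T\|_F$; (ii) the identity matrix $I_n$ minimizes $\|\mathcal{X}-\mathcal{Y}_hT\|_F$ over $T\in\mathcal{P}_n$.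
   Context: $\|\cdot\|_F$ is the Frobenius norm. A permutation matrix is a matrix $T\in\{0,1\}^{n\times n}$ with every row sum and every column sum equal to $1$. *)

(* Defs.v *)
From mathcomp Require Import all_boot all_order all_algebra.
Set Implicit Arguments. Unset Strict Implicit. Unset Printing Implicit Defensive.
Import Order.TTheory GRing.Theory Num.Theory.
Local Open Scope ring_scope.

Definition frobenius_norm (R : rcfType) (m n : nat) (A : 'M[R]_(m, n)) : R :=
  Num.sqrt (\sum_(i < m) \sum_(j < n) A i j ^+ 2).

Definition orthogonal_mx (R : rcfType) (n : nat) (Q : 'M[R]_n) : Prop :=
  Q^T *m Q = 1%:M.

Definition permutation_matrix (R : rcfType) (n : nat) (T : 'M[R]_n) : Prop :=
  (forall i j, T i j = 0 \/ T i j = 1) /\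
  (forall i, \sum_(j < n) T i j = 1) /\
  (forall j, \sum_(i < n) T i j = 1).

(* Main.v *)
Require Import Defs.
From mathcomp Require Import all_boot all_order all_algebra.
From mathcomp Require Import lra.
Import Order.TTheory GRing.Theory Num.Theory.
Local Open Scope ring_scope.

Section H.
Variable R : rcfType.

Lemma orth_r n (Q : 'M[R]_n) : orthogonal_mx Q -> Q *m Q^T = 1%:M.
Proof. by move=> h; apply: mulmx1C. Qed.

Lemma orth_tr n (Q : 'M[R]_n) : orthogonal_mx Q -> orthogonal_mx Q^T.
Proof. by move=> h; rewrite /orthogonal_mx trmxK orth_r. Qed.

Lemma orth_mul n (P Q : 'M[R]_n) : orthogonal_mx P -> orthogonal_mx Q -> orthogonal_mx (P *m Q).
Proof.
move=> hP hQ; rewrite /orthogonal_mx trmx_mul mulmxA -(mulmxA Q^T) hP mulmx1 hQ //.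
Qed.

Lemma sumsq_tr m n (A : 'M[R]_(m, n)) :
  \sum_(i < m) \sum_(j < n) A i j ^+ 2 = \tr (A^T *m A).
Proof.
rewrite /mxtrace exchange_big; apply: eq_bigr => j _; rewrite mxE.
by apply: eq_bigr => i _; rewrite !mxE expr2.
Qed.

Lemma sumsq_dev d n (A B : 'M[R]_(d, n)) (Q : 'M[R]_n) : orthogonal_mx Q ->
  \tr ((A - B *m Q)^T *m (A - B *m Q)) =
  \tr (A^T *m A) + \tr (B^T *m B) - 2 * \tr (Q^T *m (B^T *m A)).
Proof.
move=> hQ.
have -> : (A - B *m Q)^T = A^T - Q^T *m B^T by rewrite linearB /= trmx_mul.
rewrite mulmxBl !mulmxBr !linearB /=.
have e1 : \tr (A^T *m (B *m Q)) = \tr (Q^T *m (B^T *m A)).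
  rewrite -mxtrace_tr !trmx_mul trmxK. by rewrite mulmxA.
have e2 : \tr (Q^T *m B^T *m (B *m Q)) = \tr (B^T *m B).
  rewrite mxtrace_mulC !mulmxA. by rewrite -(mulmxA B Q) orth_r // mulmx1 mxtrace_mulC.
rewrite e1 e2 mulmxA; lra.
Qed.

Lemma orth_diag_le1 n (W : 'M[R]_n) i : orthogonal_mx W -> W i i <= 1.
Proof.
move=> h.
have : \sum_k W k i ^+ 2 = 1.
  have := congr1 (fun M : 'M[R]_n => M i i) (h : W^T *m W = 1%:M); rewrite !mxE eqxx /= => e; rewrite -[RHS]e.
  by apply: eq_bigr => k _; rewrite !mxE expr2.
rewrite (bigD1 i) //= => e.
have : 0 <= \sum_(k | k != i) W k i ^+ 2 by apply: sumr_ge0 => k _; apply: sqr_ge0.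
move=> h2; nra.
Qed.

Lemma tr_orth_diag n (W : 'M[R]_n) (s : 'rV[R]_n) : orthogonal_mx W ->
  (forall j, 0 <= s 0 j) -> \tr (W *m diag_mx s) <= \sum_j s 0 j.
Proof.
move=> hW hs; rewrite mul_mx_diag /mxtrace; apply: ler_sum => j _; rewrite mxE.
have := @orth_diag_le1 _ W j hW; have := hs j; nra.
Qed.

Lemma perm_orth n (T : 'M[R]_n) : permutation_matrix T -> orthogonal_mx T.
Proof.
move=> [h01 [hr hc]]; apply/matrixP => i j; rewrite !mxE.
have ge0 : forall a b, 0 <= T a b by move=> a b; case: (h01 a b) => ->.
case: eqP => [<-|/eqP ne].
  rewrite -(hc i) /=; apply: eq_bigr => k _; rewrite mxE.
  by case: (h01 k i) => ->; rewrite ?mulr0 ?mulr1.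
apply: big1 => k _; rewrite mxE.
have : T k i + T k j <= 1.
  rewrite -(hr k) (bigD1 i) //= (bigD1 j) /=; last by rewrite eq_sym.
  rewrite addrA lerDl.
  by apply: sumr_ge0 => l _; apply: ge0.
by case: (h01 k i) => ->; case: (h01 k j) => ->; rewrite ?mulr0 ?mul0r ?mulr1 //; lra.
Qed.

End H.

Theorem mainTheorem2 (R : rcfType) (d n : nat) (X Y : 'M[R]_(d, n))
    (U V : 'M[R]_n) (s : 'rV[R]_n) :
  orthogonal_mx U -> orthogonal_mx V ->
  (forall j, 0 <= s 0 j) ->
  Y^T *m X = U *m diag_mx s *m V^T ->
  let Qstar := U *m V^T in
  let Yh := Y *m Qstar in
  (* (i) Q* minimizes ||X - Y Q||_F over orthogonal Q ... *)
  (forall Q : 'M[R]_n, orthogonal_mx Q ->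
     frobenius_norm (X - Y *m Qstar) <= frobenius_norm (X - Y *m Q)) /\
  (* ... hence ||X - Yh||_F <= min over permutation matrices T *)
  (forall T : 'M[R]_n, permutation_matrix T ->
     frobenius_norm (X - Yh) <= frobenius_norm (X - Y *m T)) /\
  (* (ii) the identity minimizes ||X - Yh T||_F over permutation matrices *)
  (forall T : 'M[R]_n, permutation_matrix T ->
     frobenius_norm (X - Yh *m 1%:M) <= frobenius_norm (X - Yh *m T)).
Proof.
move=> hU hV hs hsvd Qs Yh.
have oQs : orthogonal_mx Qs by apply: orth_mul => //; apply: orth_tr.
have key : forall (B : 'M[R]_(d, n)) Q1 Q2, orthogonal_mx Q1 -> orthogonal_mx Q2 ->
    \tr (Q2^T *m (B^T *m X)) <= \tr (Q1^T *m (B^T *m X)) ->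
    frobenius_norm (X - B *m Q1) <= frobenius_norm (X - B *m Q2).
  move=> B Q1 Q2 h1 h2 hle; rewrite /frobenius_norm !sumsq_tr.
  rewrite ler_sqrt; last by rewrite -sumsq_tr; apply: sumr_ge0 => i _;
    apply: sumr_ge0 => j _; apply: sqr_ge0.
  rewrite !sumsq_dev //; lra.
have hopt : \tr (Qs^T *m (Y^T *m X)) = \sum_j s 0 j.
  rewrite hsvd /Qs trmx_mul trmxK -!mulmxA.
  by rewrite (mulmxA U^T) hU mul1mx mxtrace_mulC -mulmxA hV mulmx1 mxtrace_diag.
have part1 : forall Q : 'M[R]_n, orthogonal_mx Q ->
    frobenius_norm (X - Y *m Qs) <= frobenius_norm (X - Y *m Q).
  move=> Q hQ; apply: key => //; rewrite hopt hsvd.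
  rewrite -!mulmxA mxtrace_mulC -!mulmxA !mulmxA.
  rewrite -(mulmxA (U *m diag_mx s)) mxtrace_mulC !mulmxA.
  apply: tr_orth_diag => //; apply: orth_mul; [apply: orth_mul|] => //;
    by apply: orth_tr.
split => //; split.
  by move=> T hT; apply: part1; apply: perm_orth.
move=> T hT; apply: key => //.
  by rewrite /orthogonal_mx trmx1 mulmx1.
  by apply: perm_orth.
have eYh : Yh^T *m X = V *m diag_mx s *m V^T.
  rewrite /Yh /Qs !trmx_mul trmxK -!mulmxA hsvd !mulmxA.
  by rewrite -(mulmxA V) hU mulmx1.
have hr : \tr (1%:M^T *m (V *m diag_mx s *m V^T)) = \sum_j s 0 j.
  by rewrite trmx1 mul1mx -mulmxA mxtrace_mulC -mulmxA hV mulmx1 mxtrace_diag.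
rewrite eYh hr.
rewrite -!mulmxA mxtrace_mulC !mulmxA.
rewrite -(mulmxA (V *m diag_mx s)) mxtrace_mulC !mulmxA.
apply: tr_orth_diag => //; apply: orth_mul; [apply: orth_mul|] => //;
  [apply: orth_tr | apply: orth_tr; apply: perm_orth] => //.
Qed.
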